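(* Let $X$ be a union of conjugacy classes of a group, regarded as a rack under conjugation, $q$ a two-cocycle on $X$, and $V$ the Yetter–Drinfeld realization of $(X,q)$ over $\Bbbk G_X$. If $X$ is not braided, then there is a left coideal subalgebra of $\mathcal B(V)$ in the category of $\mathbb N_0$-graded $\Bbbk G_X$-comodules that can be extended in degree two.
   Context: $\Bbbk$ algebraically closed of characteristic $0$. A rack is a set with $\triangleright$ such that left multiplications are bijective and $x\triangleright(y\triangleright z)=(x\triangleright y)\triangleright(x\triangleright z)$. It is braided if $x\triangleright x=x$ for all $x$ and for all $x,y$ either $x\triangleright y=y$ or $x\triangleright(y\triangleright x)=y$. A two-cocycle is $q:X\times X\to\Bbbk^\times$ with $q_{x\triangleright y,x\triangleright z}q_{x,z}=q_{x,y\triangleright z}q_{y,z}$. $G_X=\langle g_x\mid g_xg_y=g_{x\triangleright y}g_x\rangle$. The realization is $V=\Bbbk X$ with basis $v_x$, $\deg v_x=g_x$, $g_x\cdot v_y=q_{x,y}v_{x\triangleright y}$ (braiding $c_q(v_x\otimes v_y)=q_{x,y}v_{x\triangleright y}\otimes v_x$). $\mathcal B(V)$ is its Nichols algebra. A left coideal subalgebra in the category of $\mathbb N_0$-graded $\Bbbk G_X$-comodules is an $\mathbb N_0$-graded, $G_X$-graded subalgebra $C\ni1$ with $\Delta(C)\subseteq\mathcal B(V)\otimes C$; it can be extended in degree $n$ if some $x\in\mathcal B(V)(n)\setminus C$ makes $\langle C,x\rangle$ again such a left coideal subalgebra. *)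

(* Defs.v *)
From HB Require Import structures.
From mathcomp Require Import all_boot all_algebra.
From mathcomp Require Import monoid.
From mathcomp Require Import finmap.
From mathcomp.multinomials Require Import monalg.

Set Implicit Arguments.
Unset Strict Implicit.
Unset Printing Implicit Defensive.

Import GRing.Theory.
Local Open Scope ring_scope.

Section Racks.
Variable X : Type.
Variable tr : X -> X -> X.

Definition braided_rack : Prop :=
  (forall x, tr x x = x) /\
  (forall x y, tr x y = y \/ tr x (tr y x) = y).

Definition two_cocycle (k : fieldType) (q : X -> X -> k) : Prop :=
  (forall x y, q x y != 0) /\
  (forall x y z, q (tr x y) (tr x z) * q x z = q x (tr y z) * q y z).

(* Equality of the images of two words in the enveloping group
   G_X = < g_x | g_x g_y = g_{x|>y} g_x >, via its universal property:
   two words are equal in G_X iff they have equal images in every group H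
   under every map phi : X -> H satisfying the defining relations. *)
Definition GX_eq (w w' : seq X) : Prop :=
  forall (H : Type) (m : H -> H -> H) (e : H) (i : H -> H),
    associative m -> left_id e m -> right_id e m ->
    left_inverse e i m -> right_inverse e i m ->
    forall phi : X -> H,
      (forall x y, m (phi x) (phi y) = m (phi (tr x y)) (phi x)) ->
      foldr m e (map phi w) = foldr m e (map phi w').
End Racks.

Definition conj_closed (G : groupType) (Xp : pred G) : Prop :=
  forall g x : G, Xp x -> Xp (x ^ g)%g.

Definition crack (G : groupType) (Xp : pred G) := {x : G | Xp x}.

(* x |> y = x y x^-1  (MathComp: y ^ z = z^-1 y z) *)
Definition ctr (G : groupType) (Xp : pred G) (hX : conj_closed Xp)
  (x y : crack Xp) : crack Xp :=
  exist _ (sval y ^ (sval x)^-1)%g (hX _ _ (proj2_sig y)).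

(* The Nichols algebra B(V) of V = kX with braiding                    *)
(*   c(v_x (x) v_y) = q_{x,y} v_{x|>y} (x) v_x,                          *)
(* realized (Rosso/Schauenburg) as the subalgebra generated by V of the *)
(* quantum shuffle algebra T^c(V); its coproduct is deconcatenation.   *)
(* T(V) = finitely supported k-valued functions on words (seq X); the  *)
(* word [:: x1; ...; xn] stands for v_x1 (x) ... (x) v_xn.              *)
Section Nichols.
Variable k : fieldType.
Variable X : choiceType.
Variable tr : X -> X -> X.
Variable q : X -> X -> k.

Definition TV := {malg k[seq X]}.

Definition vw (w : seq X) : TV := << w >>.

(* scalar by which g_a acts on the word w (the word becomes map (tr a) w) *)
Definition qw (a : X) (w : seq X) : k := \prod_(y <- w) q a y.

Definition rapp (a : X) (t : TV) : TV :=
  \sum_(w <- msupp t) t@_w *: vw (rcons w a).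

(* quantum shuffle of two words, given reversed:
   S(u'a (x) w'b) = S(u' (x) g_a.(w'b)) (x) a + S(u'a (x) w') (x) b *)
Fixpoint shr (ru : seq X) : seq X -> TV :=
  match ru with
  | [::] => fun rw => vw (rev rw)
  | a :: ru' =>
      fix inner (rw : seq X) : TV :=
        match rw with
        | [::] => vw (rev ru)
        | b :: rw' =>
            qw a rw *: rapp a (shr ru' (map (tr a) rw)) + rapp b (inner rw')
        end
  end.

Definition shw (u w : seq X) : TV := shr (rev u) (rev w).

Definition shuf (s t : TV) : TV :=
  \sum_(u <- msupp s) \sum_(w <- msupp t) (s@_u * t@_w) *: shw u w.

Inductive nichols : TV -> Prop :=
  | nich_one : nichols (vw [::])
  | nich_gen x : nichols (vw [:: x])
  | nich_add s t : nichols s -> nichols t -> nichols (s + t)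
  | nich_scale (a : k) s : nichols s -> nichols (a *: s)
  | nich_mul s t : nichols s -> nichols t -> nichols (shuf s t).

Inductive gen_subalg (C : TV -> Prop) (x : TV) : TV -> Prop :=
  | gen_in c : C c -> gen_subalg C x c
  | gen_x : gen_subalg C x x
  | gen_one : gen_subalg C x (vw [::])
  | gen_add s t : gen_subalg C x s -> gen_subalg C x t -> gen_subalg C x (s + t)
  | gen_scale (a : k) s : gen_subalg C x s -> gen_subalg C x (a *: s)
  | gen_mul s t : gen_subalg C x s -> gen_subalg C x t ->
                  gen_subalg C x (shuf s t).

Definition homog (n : nat) (t : TV) : Prop :=
  forall w, size w != n -> t@_w = 0.

Definition N0_graded (C : TV -> Prop) : Prop :=
  forall c, C c -> forall n, exists d, C d /\
    forall w, d@_w = if size w == n then c@_w else 0.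

(* C is G_X-graded (deg v_x = g_x): contains the G_X-homogeneous
   components of its elements *)
Definition GX_graded (C : TV -> Prop) : Prop :=
  forall c, C c -> forall w0 : seq X, exists d, C d /\
    forall w, (GX_eq tr w0 w -> d@_w = c@_w) /\
              (~ GX_eq tr w0 w -> d@_w = 0).

(* Delta(C) <= B(V) (x) C, with Delta the deconcatenation coproduct:
   the coefficient of (w1, w2) in Delta(c) is c@_(w1 ++ w2). *)
Definition left_coideal (C : TV -> Prop) : Prop :=
  forall c, C c -> exists s : seq (TV * TV),
    (forall p, p \in s -> nichols p.1 /\ C p.2) /\
    forall w1 w2, c@_(w1 ++ w2) = \sum_(p <- s) p.1@_w1 * p.2@_w2.

Definition lcsa (C : TV -> Prop) : Prop :=
  (forall c, C c -> nichols c) /\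
  C (vw [::]) /\
  (forall s t, C s -> C t -> C (s + t)) /\
  (forall (a : k) s, C s -> C (a *: s)) /\
  (forall s t, C s -> C t -> C (shuf s t)) /\
  N0_graded C /\ GX_graded C /\ left_coideal C.

Definition extendable_in_degree (C : TV -> Prop) (n : nat) : Prop :=
  exists x, [/\ nichols x, homog n x, ~ C x & lcsa (gen_subalg C x)].

End Nichols.

(* Main.v *)
Require Import Defs.
From HB Require Import structures.
From mathcomp Require Import all_boot all_algebra.
From mathcomp Require Import monoid.
From mathcomp Require Import finmap.
From mathcomp.multinomials Require Import monalg.
From mathcomp Require Import ring zify.
From Stdlib Require Import Classical FunctionalExtensionality ProofIrrelevance.

Module DevA.
Set Implicit Arguments.
Unset Strict Implicit.
Unset Printing Implicit Defensive.
Import GRing.Theory.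
Local Open Scope fset_scope.
Local Open Scope ring_scope.


Section Lin.
Variable k : fieldType.
Variable K : choiceType.
Implicit Types (t s : {malg k[K]}).

Definition lin (f : K -> k) t : k := \sum_(x <- msupp t) t@_x * f x.

Lemma lin_incl (d : {fset K}) f t : msupp t `<=` d ->
  lin f t = \sum_(x <- d) t@_x * f x.
Proof.
move=> sub; rewrite /lin (big_fset_incl _ sub) //.
by move=> x _ /mcoeff_outdom ->; rewrite mul0r.
Qed.

Lemma linD f s t : lin f (s + t) = lin f s + lin f t.
Proof.
set d := msupp s `|` msupp t `|` msupp (s + t).
rewrite (@lin_incl d) ?(@lin_incl d _ s) ?(@lin_incl d _ t) /d;
  try by apply/fsubsetP => x xi; rewrite !inE xi ?orbT.
by rewrite -big_split /=; apply: eq_bigr => x _; rewrite mcoeffD mulrDl.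
Qed.

Lemma linZ f a t : lin f (a *: t) = a * lin f t.
Proof.
rewrite (@lin_incl (msupp t)) ?msuppZ_le // /lin mulr_sumr.
by apply: eq_bigr => x _; rewrite mcoeffZ mulrA.
Qed.

Lemma lin0 f : lin f 0 = 0.
Proof. by rewrite /lin msupp0 big_seq_fset0. Qed.

Lemma linU f (x : K) : lin f << x >> = f x.
Proof.
by rewrite /lin msuppU oner_eq0 big_seq_fset1 mcoeffUU mul1r.
Qed.

Lemma lin_sum I (r : seq I) (F : I -> {malg k[K]}) f :
  lin f (\sum_(i <- r) F i) = \sum_(i <- r) lin f (F i).
Proof.
elim: r => [|i r IH]; first by rewrite !big_nil lin0.
by rewrite !big_cons linD IH.
Qed.

Lemma lin_eq_in f g t : (forall x, x \in msupp t -> f x = g x) -> lin f t = lin g t.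
Proof. by move=> h; apply: eq_big_seq => x /h ->. Qed.

Lemma lin_coef t x : lin (fun y => (y == x)%:R) t = t@_x.
Proof.
have [xin|xnin] := boolP (x \in msupp t).
  rewrite /lin (big_fsetD1 x) //= eqxx mulr1 big1_fset ?addr0 //.
  by move=> y; rewrite !inE => /andP[/negbTE -> _] _; rewrite mulr0.
rewrite (mcoeff_outdom xnin) /lin big1_seq // => y /= yin.
by case: eqP => [e|_]; [rewrite e (negbTE xnin) in yin|rewrite mulr0].
Qed.

Lemma lin_mulr f a t : lin (fun x => f x * a) t = lin f t * a.
Proof. by rewrite /lin mulr_suml; apply: eq_bigr => x _; rewrite mulrA. Qed.
Lemma lin_mull f a t : lin (fun x => a * f x) t = a * lin f t.
Proof. by rewrite /lin mulr_sumr; apply: eq_bigr => x _; rewrite mulrCA. Qed.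
Lemma lin_add f g t : lin (fun x => f x + g x) t = lin f t + lin g t.
Proof. by rewrite /lin -big_split; apply: eq_bigr => x _; rewrite mulrDr. Qed.
Lemma lin_sumf I (r : seq I) (F : I -> K -> k) t :
  lin (fun x => \sum_(i <- r) F i x) t = \sum_(i <- r) lin (F i) t.
Proof.
rewrite /lin exchange_big /=; apply: eq_bigr => x _; by rewrite mulr_sumr.
Qed.

Lemma malg_lin t t' : (forall f, lin f t = lin f t') -> t = t'.
Proof. by move=> h; apply/malgP => x; rewrite -!lin_coef h. Qed.

End Lin.

End DevA.

Module DevB.
Import DevA.
Set Implicit Arguments.
Unset Strict Implicit.
Unset Printing Implicit Defensive.
Import GRing.Theory.
Local Open Scope fset_scope.
Local Open Scope ring_scope.


Section Shuffle.
Variable k : fieldType.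
Variable X : choiceType.
Variable tr : X -> X -> X.
Variable q : X -> X -> k.
Local Notation TV := (TV k X).
Local Notation vw := (vw k).
Local Notation shw := (shw tr q).
Local Notation shuf := (shuf tr q).
Local Notation qw := (qw q).
Implicit Types (s t : TV) (u w W : seq X).

Lemma natr_and (b1 b2 : bool) : (b1 && b2)%:R = b1%:R * b2%:R :> k.
Proof. by case: b1; case: b2; rewrite ?mul1r ?mul0r. Qed.

Lemma lin_vw f w : lin f (vw w) = f w.
Proof. exact: linU. Qed.

Lemma vwE w W : (vw w)@_W = (w == W)%:R.
Proof. by rewrite /Defs.vw mcoeffU. Qed.

Lemma lin_shuf f s t :
  lin f (shuf s t) = lin (fun u => lin (fun w => lin f (shw u w)) t) s.
Proof.
rewrite /Defs.shuf lin_sum [in RHS]/lin; apply: eq_bigr => u _.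
rewrite lin_sum mulr_sumr; apply: eq_bigr => w _.
by rewrite linZ mulrA.
Qed.

Lemma shufE s t W :
  (shuf s t)@_W = lin (fun u => lin (fun w => (shw u w)@_W) t) s.
Proof.
rewrite -lin_coef lin_shuf; apply: eq_bigr => u _; congr (_ * _).
by apply: eq_bigr => w _; rewrite lin_coef.
Qed.

Lemma shufDl s1 s2 t : shuf (s1 + s2) t = shuf s1 t + shuf s2 t.
Proof. by apply: malg_lin => f; rewrite linD !lin_shuf linD. Qed.
Lemma shufDr s t1 t2 : shuf s (t1 + t2) = shuf s t1 + shuf s t2.
Proof.
apply: malg_lin => f; rewrite linD !lin_shuf -lin_add.
by apply: eq_bigr => u _; rewrite linD.
Qed.
Lemma shufZl a s t : shuf (a *: s) t = a *: shuf s t.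
Proof. by apply: malg_lin => f; rewrite linZ !lin_shuf linZ. Qed.
Lemma shufZr a s t : shuf s (a *: t) = a *: shuf s t.
Proof.
apply: malg_lin => f; rewrite linZ !lin_shuf -lin_mull.
by apply: eq_bigr => u _; rewrite linZ.
Qed.
Lemma shuf0l t : shuf 0 t = 0.
Proof. by rewrite -[in LHS](scale0r (0:TV)) shufZl scale0r. Qed.
Lemma shuf0r s : shuf s 0 = 0.
Proof.
by rewrite -[in LHS](scale0r (0:TV)) shufZr scale0r.
Qed.
Lemma shuf_suml I (r : seq I) (F : I -> TV) t :
  shuf (\sum_(i <- r) F i) t = \sum_(i <- r) shuf (F i) t.
Proof.
elim: r => [|i r IH]; first by rewrite !big_nil shuf0l.
by rewrite !big_cons shufDl IH.
Qed.
Lemma shuf_sumr I (r : seq I) (F : I -> TV) s :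
  shuf s (\sum_(i <- r) F i) = \sum_(i <- r) shuf s (F i).
Proof.
elim: r => [|i r IH]; first by rewrite !big_nil shuf0r.
by rewrite !big_cons shufDr IH.
Qed.
Lemma shuf_vw u w : shuf (vw u) (vw w) = shw u w.
Proof. by apply: malg_lin => f; rewrite lin_shuf !lin_vw. Qed.

Lemma lin_rapp f a t : lin f (rapp a t) = lin (fun w => f (rcons w a)) t.
Proof.
rewrite /Defs.rapp lin_sum; apply: eq_bigr => w _; by rewrite linZ lin_vw.
Qed.

Lemma rappE_rcons a t W c : (rapp a t)@_(rcons W c) = (c == a)%:R * t@_W.
Proof.
rewrite -lin_coef lin_rapp -lin_coef -lin_mull; apply: eq_bigr => w _.
rewrite eqseq_rcons (eq_sym c a).
by rewrite natr_and [_%:R * _]mulrC.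
Qed.

Lemma rappE_nil a t : (rapp a t)@_[::] = 0.
Proof.
rewrite -lin_coef lin_rapp /lin big1 // => w _.
by case: w => [|? ?]; rewrite mulr0.
Qed.

Lemma qw_nil a : qw a [::] = 1.
Proof. by rewrite /Defs.qw big_nil. Qed.
Lemma qw_cat a u w : qw a (u ++ w) = qw a u * qw a w.
Proof. by rewrite /Defs.qw big_cat. Qed.
Lemma qw_cons a b w : qw a (b :: w) = q a b * qw a w.
Proof. by rewrite /Defs.qw big_cons. Qed.
Lemma qw_rcons a b w : qw a (rcons w b) = qw a w * q a b.
Proof. by rewrite -cats1 qw_cat /Defs.qw big_seq1. Qed.
Lemma qw_rev a w : qw a (rev w) = qw a w.
Proof. by rewrite /Defs.qw big_rev. Qed.

Lemma shw_nil_l w : shw [::] w = vw w.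
Proof. by rewrite /Defs.shw /= revK. Qed.

Lemma shw_nil_r u : shw u [::] = vw u.
Proof.
rewrite /Defs.shw /=; case E: (rev u) => [|a ru] /=.
  by rewrite -(revK u) E.
by rewrite -E revK.
Qed.

Lemma shr_cons_cons a ru b rw : shr tr q (a :: ru) (b :: rw) =
  qw a (b :: rw) *: rapp a (shr tr q ru (map (tr a) (b :: rw)))
  + rapp b (shr tr q (a :: ru) rw).
Proof. by []. Qed.

Lemma shw_rcons u a w b :
  shw (rcons u a) (rcons w b) =
  qw a (rcons w b) *: rapp a (shw u (map (tr a) (rcons w b)))
  + rapp b (shw (rcons u a) w).
Proof.
rewrite /Defs.shw !rev_rcons shr_cons_cons.
by rewrite -map_rev rev_rcons -rev_rcons qw_rev.
Qed.

Lemma shw_coef_nil u w : (shw u w)@_[::] = ((u == [::]) && (w == [::]))%:R.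
Proof.
case/lastP: u => [|u a]; first by rewrite shw_nil_l vwE eq_sym.
case/lastP: w => [|w b].
  by rewrite shw_nil_r vwE /= andbT; case: u.
by rewrite shw_rcons mcoeffD mcoeffZ !rappE_nil mulr0 addr0; case: u.
Qed.

Lemma shw_coef_rcons u a w b W c :
  (shw (rcons u a) (rcons w b))@_(rcons W c) =
  (c == a)%:R * qw a (rcons w b) * (shw u (map (tr a) (rcons w b)))@_W
  + (c == b)%:R * (shw (rcons u a) w)@_W.
Proof. by rewrite shw_rcons mcoeffD mcoeffZ !rappE_rcons mulrCA mulrA. Qed.

Lemma shw_coef_nil_l w b W c :
  (shw [::] (rcons w b))@_(rcons W c) = (c == b)%:R * (shw [::] w)@_W.
Proof.
rewrite !shw_nil_l !vwE eqseq_rcons.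
by rewrite natr_and mulrC (eq_sym b c).
Qed.

Lemma shw_coef_nil_r u a W c :
  (shw (rcons u a) [::])@_(rcons W c) = (c == a)%:R * (shw u [::])@_W.
Proof.
rewrite !shw_nil_r !vwE eqseq_rcons.
by rewrite natr_and mulrC (eq_sym a c).
Qed.

Lemma shw_coef_nil_nil W c : (shw [::] [::])@_(rcons W c) = 0.
Proof. by rewrite shw_nil_l vwE; case: W. Qed.

End Shuffle.

End DevB.

Module DevC.
Import DevA DevB.
Set Implicit Arguments.
Unset Strict Implicit.
Unset Printing Implicit Defensive.
Import GRing.Theory.
Local Open Scope fset_scope.
Local Open Scope ring_scope.


Section Cop.
Variable k : fieldType.
Variable X : choiceType.
Variable tr : X -> X -> X.
Variable q : X -> X -> k.
Local Notation TV := (TV k X).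
Local Notation vw := (vw k).
Local Notation shw := (shw tr q).
Local Notation shuf := (shuf tr q).
Local Notation qw := (qw q).
Implicit Types (s t : TV) (u w W : seq X).

Fixpoint actw (v w : seq X) : k * seq X :=
  match v with
  | [::] => (1, w)
  | c :: v' => let p := actw v' w in (p.1 * qw c p.2, map (tr c) p.2)
  end.
Definition Lw v w := (actw v w).1.
Definition Aw v w := (actw v w).2.

Lemma Lw_nil w : Lw [::] w = 1. Proof. by []. Qed.
Lemma Aw_nil w : Aw [::] w = w. Proof. by []. Qed.

Lemma actw_rcons v a w :
  actw (rcons v a) w = (qw a w * Lw v (map (tr a) w), Aw v (map (tr a) w)).
Proof.
elim: v => [|c v IH] /=; first by rewrite mul1r mulr1.
by rewrite IH /= /Lw /Aw mulrA.
Qed.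
Lemma Lw_rcons v a w : Lw (rcons v a) w = qw a w * Lw v (map (tr a) w).
Proof. by rewrite /Lw actw_rcons. Qed.
Lemma Aw_rcons v a w : Aw (rcons v a) w = Aw v (map (tr a) w).
Proof. by rewrite /Aw actw_rcons. Qed.

Definition splits (u : seq X) := [seq (take i u, drop i u) | i <- iota 0 (size u).+1].

Arguments splits : simpl never.

Lemma sumr_rcons (T : Type) (s : seq T) x (F : T -> k) :
  \sum_(p <- rcons s x) F p = \sum_(p <- s) F p + F x.
Proof. by rewrite -cats1 big_cat big_seq1. Qed.

Lemma splits_nil : splits [::] = [:: ([::], [::])].
Proof. by []. Qed.

Lemma splits_rcons u a : splits (rcons u a) =
  rcons [seq (p.1, rcons p.2 a) | p <- splits u] (rcons u a, [::]).
Proof.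
rewrite /splits size_rcons.
have -> : iota 0 (size u).+2 = rcons (iota 0 (size u).+1) (size u).+1.
  by rewrite -cats1 -addn1 iotaD.
rewrite map_rcons -map_comp; congr (rcons _ _); last first.
  by rewrite take_oversize ?drop_oversize ?size_rcons.
apply/eq_in_map => i; rewrite mem_iota add0n ltnS => /andP[_ hi] /=.
by rewrite -cats1 takel_cat // cats1 drop_rcons.
Qed.

Lemma splits_map f u : splits (map f u) =
  [seq (map f p.1, map f p.2) | p <- splits u].
Proof.
rewrite /splits size_map -map_comp; apply: eq_map => i /=.
by rewrite map_take map_drop.
Qed.

Lemma splits_cat u p : p \in splits u -> p.1 ++ p.2 = u.
Proof. by case/mapP => i _ ->; rewrite cat_take_drop. Qed.

Lemma sum_splits_last u (F : seq X * seq X -> k) :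
  \sum_(p <- splits u) F p * (p.2 == [::])%:R = F (u, [::]).
Proof.
case/lastP: u => [|u a]; first by rewrite splits_nil big_seq1 mulr1.
rewrite splits_rcons -cats1 big_cat big_seq1 big_map big1; first by rewrite /= add0r mulr1.
by move=> [p1 p2] _; rewrite /= -cats1; case: p2 => [|? ?]; rewrite mulr0.
Qed.

Definition TA u w W c :=
  if rev u is a :: ru then (c == a)%:R * qw a w * (shw (rev ru) (map (tr a) w))@_W
  else 0.
Definition TB u w W c :=
  if rev w is b :: rw then (c == b)%:R * (shw u (rev rw))@_W else 0.

Arguments TA : simpl never.
Arguments TB : simpl never.

Lemma TA_nil w W c : TA [::] w W c = 0. Proof. by []. Qed.
Lemma TA_rcons u a w W c :
  TA (rcons u a) w W c = (c == a)%:R * qw a w * (shw u (map (tr a) w))@_W.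
Proof. by rewrite /TA rev_rcons revK. Qed.
Lemma TB_nil u W c : TB u [::] W c = 0. Proof. by []. Qed.
Lemma TB_rcons u w b W c : TB u (rcons w b) W c = (c == b)%:R * (shw u w)@_W.
Proof. by rewrite /TB rev_rcons revK. Qed.

Lemma shw_coef_R u w W c : (shw u w)@_(rcons W c) = TA u w W c + TB u w W c.
Proof.
case/lastP: u => [|u a]; case/lastP: w => [|w b].
- by rewrite shw_coef_nil_nil TA_nil TB_nil addr0.
- by rewrite shw_coef_nil_l TA_nil TB_rcons add0r.
- by rewrite shw_coef_nil_r TA_rcons TB_nil addr0 qw_nil mulr1.
- by rewrite shw_coef_rcons TA_rcons TB_rcons.
Qed.

Definition T3 W1 W2 (p r : seq X * seq X) :=
  Lw p.2 r.1 * (shw p.1 (Aw p.2 r.1))@_W1 * (shw p.2 r.2)@_W2.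

Lemma shw_cop u w W1 W2 : (shw u w)@_(W1 ++ W2) =
  \sum_(p <- splits u) \sum_(r <- splits w) T3 W1 W2 p r.
Proof.
elim/last_ind: W2 => [|W2 c IH] in u w *.
  rewrite cats0 /T3.
  transitivity (\sum_(p <- splits u) (\sum_(r <- splits w)
     (Lw p.2 r.1 * (shw p.1 (Aw p.2 r.1))@_W1) * (r.2 == [::])%:R)
     * (p.2 == [::])%:R).
    by rewrite sum_splits_last sum_splits_last Lw_nil Aw_nil mul1r.
  apply: eq_bigr => p _; rewrite mulr_suml; apply: eq_bigr => r _.
  by rewrite shw_coef_nil natr_and; ring.
rewrite -rcons_cat shw_coef_R /T3.
under eq_bigr do under eq_bigr do rewrite shw_coef_R mulrDr.
under eq_bigr do rewrite big_split /=.
rewrite big_split /=; congr (_ + _).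
  case/lastP: u => [|u a].
    by rewrite TA_nil splits_nil !big_seq1 big1 // => r _; rewrite TA_nil mulr0.
  rewrite TA_rcons IH splits_rcons sumr_rcons.
  rewrite [X in _ = _ + X]big1 ?addr0; last by move=> r _; rewrite TA_nil mulr0.
  rewrite [in RHS]big_map mulr_sumr; apply: eq_bigr => p _ /=.
  rewrite splits_map [in LHS]big_map mulr_sumr; apply: eq_big_seq => r rin /=.
  rewrite TA_rcons Lw_rcons Aw_rcons /T3 /= -(splits_cat rin) qw_cat.
  ring.
case/lastP: w => [|w b].
  by rewrite TB_nil splits_nil big1 // => p _; rewrite big_seq1 TB_nil mulr0.
rewrite TB_rcons IH mulr_sumr; apply: eq_bigr => p _.
rewrite splits_rcons sumr_rcons TB_nil mulr0 addr0 [in RHS]big_map.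
rewrite mulr_sumr; apply: eq_bigr => r _ /=.
by rewrite TB_rcons /T3; ring.
Qed.

End Cop.

End DevC.

Module DevD.
Import DevA DevB DevC.
Set Implicit Arguments.
Unset Strict Implicit.
Unset Printing Implicit Defensive.
Import GRing.Theory.
Local Open Scope fset_scope.
Local Open Scope ring_scope.


Section Act.
Variable k : fieldType.
Variable X : choiceType.
Variable tr : X -> X -> X.
Variable q : X -> X -> k.
Variable trinv : X -> X -> X.
Hypothesis Hsd : forall x y z, tr x (tr y z) = tr (tr x y) (tr x z).
Hypothesis HtrK : forall x, cancel (tr x) (trinv x).
Hypothesis HtrKV : forall x, cancel (trinv x) (tr x).
Hypothesis Hcoc : forall x y z,
  q (tr x y) (tr x z) * q x z = q x (tr y z) * q y z.
Local Notation TV := (TV k X).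
Local Notation vw := (vw k).
Local Notation shw := (shw tr q).
Local Notation shuf := (shuf tr q).
Local Notation qw := (qw q).
Local Notation Lw := (Lw tr q).
Local Notation Aw := (Aw tr q).
Local Notation TA := (TA tr q).
Local Notation TB := (TB tr q).
Implicit Types (s t : TV) (u w W : seq X).

Lemma natr_true : true%:R = 1 :> k. Proof. by []. Qed.

Lemma lin_delta (g : seq X -> k) t y :
  lin (fun x => g x * (x == y)%:R) t = t@_y * g y.
Proof.
rewrite (@lin_eq_in _ _ _ (fun x => g y * (x == y)%:R)).
  by rewrite lin_mull lin_coef mulrC.
by move=> x _; case: eqP => [->|]; rewrite ?mulr0.
Qed.

Lemma qw_coc c a w : qw a w * qw c (map (tr a) w) = qw (tr c a) (map (tr c) w) * qw c w.
Proof.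
elim: w => [|y w IH]; first by rewrite !qw_nil mulr1.
rewrite /= !qw_cons.
transitivity ((q c (tr a y) * q a y) * (qw a w * qw c (map (tr a) w))); first by ring.
rewrite IH -Hcoc; ring.
Qed.

Lemma map_tr_inj c : injective (map (tr c)).
Proof. apply: inj_map; exact: can_inj (HtrK c). Qed.

Lemma act1_coef c u w W :
  (shw u w)@_W * qw c W =
  qw c u * qw c w * (shw (map (tr c) u) (map (tr c) w))@_(map (tr c) W).
Proof.
elim/last_ind: W => [|V e IH] in u w *.
  rewrite !shw_coef_nil qw_nil mulr1.
  by case: u => [|? ?]; case: w => [|? ?]; rewrite /= ?qw_nil ?mul1r ?mulr0.
rewrite map_rcons !shw_coef_R mulrDl mulrDr; congr (_ + _).
  case/lastP: u => [|u a]; first by rewrite !TA_nil mul0r mulr0.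
  rewrite map_rcons !TA_rcons (inj_eq (can_inj (HtrK c))).
  case: (eqVneq e a) => [->|nea]; last by rewrite !mul0r !mulr0.
  rewrite -[true%:R]/(1 *+ 1) !mulr1n !mul1r qw_rcons qw_rcons.
  transitivity (qw a w * ((shw u (map (tr a) w))@_V * qw c V) * q c a); first by ring.
  rewrite IH.
  have -> : map (tr (tr c a)) (map (tr c) w) = map (tr c) (map (tr a) w).
    by rewrite -!map_comp; apply: eq_map => y /=; rewrite [RHS]Hsd.
  transitivity (qw c u * q c a * (shw (map (tr c) u) (map (tr c) (map (tr a) w)))@_(map (tr c) V)
    * (qw a w * qw c (map (tr a) w))); first by ring.
  rewrite qw_coc; ring.
case/lastP: w => [|w b]; first by rewrite !TB_nil mul0r mulr0.
rewrite map_rcons !TB_rcons (inj_eq (can_inj (HtrK c))).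
case: (eqVneq e b) => [->|neb]; last by rewrite !mul0r !mulr0.
rewrite -[true%:R]/(1 *+ 1) !mulr1n !mul1r qw_rcons qw_rcons.
transitivity (((shw u w)@_V * qw c V) * q c b); first by ring.
rewrite IH; ring.
Qed.

Definition actT v t : TV := \sum_(w <- msupp t) (t@_w * Lw v w) *: vw (Aw v w).

Lemma lin_actT f v t : lin f (actT v t) = lin (fun w => Lw v w * f (Aw v w)) t.
Proof.
rewrite /actT lin_sum [in RHS]/lin; apply: eq_bigr => w _.
by rewrite linZ lin_vw mulrA.
Qed.

Lemma actT_coef v t W : (actT v t)@_W = lin (fun w => Lw v w * (Aw v w == W)%:R) t.
Proof. by rewrite -lin_coef lin_actT. Qed.

Lemma actTD v s t : actT v (s + t) = actT v s + actT v t.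
Proof. by apply: malg_lin => f; rewrite linD !lin_actT linD. Qed.
Lemma actTZ v a t : actT v (a *: t) = a *: actT v t.
Proof. by apply: malg_lin => f; rewrite linZ !lin_actT linZ. Qed.
Lemma actT_vw v w : actT v (vw w) = Lw v w *: vw (Aw v w).
Proof. by apply: malg_lin => f; rewrite lin_actT linZ !lin_vw. Qed.

Lemma actT1_shw c u w :
  actT [:: c] (shw u w) = (qw c u * qw c w) *: shw (map (tr c) u) (map (tr c) w).
Proof.
apply/malgP => W; rewrite actT_coef mcoeffZ.
have -> : W = map (tr c) (map (trinv c) W).
  by rewrite -map_comp map_id_in // => x _ /=; rewrite HtrKV.
set W' := map (trinv c) W.
rewrite (@lin_eq_in _ _ _ (fun x => (1 * qw c x) * (x == W')%:R)).
  by rewrite lin_delta mul1r act1_coef.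
move=> x _; congr (_ * _%:R).
by rewrite /Aw /= (inj_eq (@map_tr_inj c)).
Qed.

Lemma actT1_shuf c s t :
  actT [:: c] (shuf s t) = shuf (actT [:: c] s) (actT [:: c] t).
Proof.
apply: malg_lin => f; rewrite lin_actT !lin_shuf lin_actT.
apply: eq_bigr => u _; congr (_ * _).
rewrite lin_actT -lin_mull; apply: eq_bigr => w _; congr (_ * _).
rewrite -(lin_actT f) actT1_shw linZ /Lw /Aw /=.
by rewrite !mul1r; ring.
Qed.

Lemma actT_cons c v t : actT (c :: v) t = actT [:: c] (actT v t).
Proof.
apply: malg_lin => f; rewrite !lin_actT; apply: eq_bigr => w _.
rewrite /Lw /Aw /=; ring.
Qed.

Lemma nichols_act1 c t : nichols tr q t -> nichols tr q (actT [:: c] t).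
Proof.
elim=> [|x|s1 s2 _ h1 _ h2|a s1 _ h|s1 s2 _ h1 _ h2].
- by rewrite actT_vw; apply: nich_scale; apply: nich_one.
- by rewrite actT_vw; apply: nich_scale; apply: nich_gen.
- by rewrite actTD; apply: nich_add.
- by rewrite actTZ; apply: nich_scale.
- by rewrite actT1_shuf; apply: nich_mul.
Qed.

Lemma nichols_act v t : nichols tr q t -> nichols tr q (actT v t).
Proof.
elim: v => [|c v IH] h.
  suff -> : actT [::] t = t by [].
  by apply: malg_lin => f; rewrite lin_actT; apply: eq_bigr => w _; rewrite /Lw /Aw /= mul1r.
by rewrite actT_cons; apply: nichols_act1; apply: IH.
Qed.

Lemma foldr_map_cat (H : Type) (m : H -> H -> H) e (phi : X -> H) :
  associative m -> left_id e m -> forall w1 w2,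
  foldr m e (map phi (w1 ++ w2)) = m (foldr m e (map phi w1)) (foldr m e (map phi w2)).
Proof.
move=> hA hl; elim=> [|x w1 IH] w2 /=; first by rewrite hl.
by rewrite IH hA.
Qed.

Lemma GX_refl w : GX_eq tr w w.
Proof. by move=> *. Qed.
Lemma GX_sym w w' : GX_eq tr w w' -> GX_eq tr w' w.
Proof. by move=> h H m e i h1 h2 h3 h4 h5 phi hr; rewrite (h H m e i). Qed.
Lemma GX_trans w1 w2 w3 : GX_eq tr w1 w2 -> GX_eq tr w2 w3 -> GX_eq tr w1 w3.
Proof.
by move=> h h' H m e i h1 h2 h3 h4 h5 phi hr; rewrite (h H m e i) // (h' H m e i).
Qed.
Lemma GX_cat u u' w w' : GX_eq tr u u' -> GX_eq tr w w' -> GX_eq tr (u ++ w) (u' ++ w').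
Proof.
move=> h h' H m e i h1 h2 h3 h4 h5 phi hr.
by rewrite !foldr_map_cat // (h H m e i) // (h' H m e i).
Qed.
Lemma GX_swap a w : GX_eq tr (map (tr a) w ++ [:: a]) (a :: w).
Proof.
move=> H m e i hA hl hr h4 h5 phi hrel.
rewrite foldr_map_cat //= hr.
elim: w => [|y w IH] /=; first by rewrite hl hr.
by rewrite -hA IH hA -hrel -hA.
Qed.

Lemma shw_GX u w W : (shw u w)@_W != 0 -> GX_eq tr (u ++ w) W.
Proof.
elim/last_ind: W => [|V e IH] in u w *.
  rewrite shw_coef_nil; case: u => [|? ?]; case: w => [|? ?]; rewrite ?eqxx //=.
rewrite shw_coef_R; case: (eqVneq (TA u w V e) 0) => [hA|hA].
  rewrite hA add0r; clear hA; case/lastP: w => [|w b]; first by rewrite TB_nil eqxx.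
  rewrite TB_rcons; case: (eqVneq e b) => [->|]; last by rewrite mul0r eqxx.
  rewrite natr_true mul1r => /IH h; rewrite -!cats1 catA; apply: GX_cat => //; exact: GX_refl.
move=> _; move: hA; case/lastP: u => [|u a]; first by rewrite TA_nil eqxx.
rewrite TA_rcons; case: (eqVneq e a) => [->|]; last by rewrite !mul0r eqxx.
rewrite natr_true mul1r mulf_eq0 negb_or => /andP[_ /IH h].
rewrite -!cats1 -catA; apply: GX_trans (_ : GX_eq tr (u ++ (map (tr a) w ++ [:: a])) _).
  apply: GX_cat; first exact: GX_refl.
  exact: GX_sym (GX_swap a w).
rewrite catA; apply: GX_cat => //; exact: GX_refl.
Qed.

Lemma shw_size u w W : (shw u w)@_W != 0 -> size W = (size u + size w)%N.
Proof.
elim/last_ind: W => [|V e IH] in u w *.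
  by rewrite shw_coef_nil; case: u => [|? ?]; case: w => [|? ?]; rewrite ?eqxx.
rewrite shw_coef_R; case: (eqVneq (TA u w V e) 0) => [hA|hA].
  rewrite hA add0r; clear hA; case/lastP: w => [|w b]; first by rewrite TB_nil eqxx.
  rewrite TB_rcons; case: (eqVneq e b) => [->|]; last by rewrite mul0r eqxx.
  by rewrite natr_true mul1r => /IH h; rewrite !size_rcons h addnS.
move=> _; move: hA; case/lastP: u => [|u a]; first by rewrite TA_nil eqxx.
rewrite TA_rcons; case: (eqVneq e a) => [->|]; last by rewrite !mul0r eqxx.
rewrite natr_true mul1r mulf_eq0 negb_or => /andP[_ /IH h].
by rewrite !size_rcons h size_map addSn.
Qed.

End Act.

End DevD.

Module DevE.
Import DevA DevB DevC DevD.
Set Implicit Arguments.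
Unset Strict Implicit.
Unset Printing Implicit Defensive.
Import GRing.Theory.
Local Open Scope ring_scope.


Section Mono.
Variable k : fieldType.
Variable X : choiceType.
Variable tr : X -> X -> X.
Variable q : X -> X -> k.
Variable trinv : X -> X -> X.
Hypothesis Hsd : forall x y z, tr x (tr y z) = tr (tr x y) (tr x z).
Hypothesis HtrK : forall x, cancel (tr x) (trinv x).
Hypothesis HtrKV : forall x, cancel (trinv x) (tr x).
Hypothesis Hcoc : forall x y z,
  q (tr x y) (tr x z) * q x z = q x (tr y z) * q y z.
Hypothesis Hq0 : forall x y, q x y != 0.
Local Notation qw := (qw q).
Local Notation Lw := (Lw tr q).
Local Notation Aw := (Aw tr q).

Record mono := Mono {
  msig : seq X -> seq X; minv : seq X -> seq X; mlam : seq X -> k;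
  _ : cancel msig minv; _ : cancel minv msig; _ : forall w, mlam w != 0 }.

Lemma mono_eq h1 h2 : msig h1 = msig h2 -> mlam h1 = mlam h2 -> h1 = h2.
Proof.
case: h1 => s1 i1 l1 a1 b1 c1; case: h2 => s2 i2 l2 a2 b2 c2 /= es el.
subst s2 l2.
have ei : i1 = i2.
  apply: functional_extensionality => w.
  by rewrite -{1}(b2 w) a1.
subst i2.
by rewrite (proof_irrelevance _ a1 a2) (proof_irrelevance _ b1 b2) (proof_irrelevance _ c1 c2).
Qed.

Definition mmul (h1 h2 : mono) : mono.
Proof.
refine (@Mono (msig h1 \o msig h2) (minv h2 \o minv h1)
  (fun w => mlam h2 w * mlam h1 (msig h2 w)) _ _ _).
- case: h1 => s1 i1 l1 a1 b1 c1; case: h2 => s2 i2 l2 a2 b2 c2 /=.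
  by move=> w /=; rewrite a1 a2.
- case: h1 => s1 i1 l1 a1 b1 c1; case: h2 => s2 i2 l2 a2 b2 c2 /=.
  by move=> w /=; rewrite b2 b1.
- case: h1 => s1 i1 l1 a1 b1 c1; case: h2 => s2 i2 l2 a2 b2 c2 /=.
  by move=> w; rewrite mulf_neq0.
Defined.

Definition mone : mono.
Proof. by refine (@Mono id id (fun _ => 1) _ _ _) => // w; rewrite oner_eq0. Defined.

Definition minvm (h : mono) : mono.
Proof.
refine (@Mono (minv h) (msig h) (fun w => (mlam h (minv h w))^-1) _ _ _).
- by case: h => s i l a b c.
- by case: h => s i l a b c.
- by case: h => s i l a b c /= w; rewrite invr_eq0.
Defined.

Lemma mmulA : associative mmul.
Proof.
move=> h1 h2 h3; apply: mono_eq => //=.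
by apply: functional_extensionality => w /=; rewrite mulrA.
Qed.
Lemma mmul1 : left_id mone mmul.
Proof. by move=> h; apply: mono_eq => //=; apply: functional_extensionality => w; rewrite mulr1. Qed.
Lemma mmulr1 : right_id mone mmul.
Proof. by move=> h; apply: mono_eq => //=; apply: functional_extensionality => w; rewrite mul1r. Qed.
Lemma mmulVl : left_inverse mone minvm mmul.
Proof.
case=> s i l a b c; apply: mono_eq => /=.
  by apply: functional_extensionality => w /=; rewrite a.
by apply: functional_extensionality => w /=; rewrite a divff.
Qed.
Lemma mmulVr : right_inverse mone minvm mmul.
Proof.
case=> s i l a b c; apply: mono_eq => /=.
  by apply: functional_extensionality => w /=; rewrite b.
by apply: functional_extensionality => w /=; rewrite mulVf.
Qed.

Lemma qw_neq0 a w : qw a w != 0.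
Proof. by rewrite /Defs.qw prodf_seq_neq0; apply/allP => y _ /=. Qed.

Definition mphi (x : X) : mono.
Proof.
refine (@Mono (map (tr x)) (map (trinv x)) (qw x) _ _ _).
- exact: mapK.
- exact: mapK.
- exact: qw_neq0.
Defined.

Lemma mphi_rel x y : mmul (mphi x) (mphi y) = mmul (mphi (tr x y)) (mphi x).
Proof.
apply: mono_eq => /=.
  apply: functional_extensionality => w /=.
  by rewrite -!map_comp; apply: eq_map => z /=; rewrite Hsd.
apply: functional_extensionality => w /=.
by rewrite qw_coc // mulrC.
Qed.

Lemma mphi_fold_sig v w : msig (foldr mmul mone (map mphi v)) w = Aw v w.
Proof. by elim: v => [|c v IH] //=; rewrite IH. Qed.
Lemma mphi_fold_lam v w : mlam (foldr mmul mone (map mphi v)) w = Lw v w.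
Proof.
elim: v => [|c v IH] //=.
by rewrite IH mphi_fold_sig.
Qed.

Lemma GX_actw r u : GX_eq tr r u -> forall w, Lw r w = Lw u w /\ Aw r w = Aw u w.
Proof.
move=> h w.
have := h mono mmul mone minvm mmulA mmul1 mmulr1 mmulVl mmulVr mphi mphi_rel.
by move=> e; rewrite -!mphi_fold_lam -!mphi_fold_sig e.
Qed.

End Mono.

End DevE.

Module DevF.
Import DevA DevB DevC DevD DevE.
Set Implicit Arguments.
Unset Strict Implicit.
Unset Printing Implicit Defensive.
Import GRing.Theory.
Local Open Scope ring_scope.


Section LinSeq.
Variable k : fieldType.
Variable K : choiceType.

Lemma lin_incl_seq (r : seq K) f (t : {malg k[K]}) : uniq r ->
  {subset msupp t <= r} -> lin f t = \sum_(x <- r) t@_x * f x.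
Proof.
move=> ur sub.
rewrite (bigID (fun x => x \in msupp t)) /= [X in _ = _ + X]big1 ?addr0; last first.
  by move=> x /mcoeff_outdom ->; rewrite mul0r.
rewrite -big_filter /lin; apply: perm_big.
apply: uniq_perm; rewrite ?fset_uniq ?filter_uniq //.
by move=> x; rewrite mem_filter; case: (boolP (x \in msupp t)) => // /sub ->.
Qed.

Lemma sum_delta_seq (r : seq K) (F : K -> k) y : uniq r -> y \in r ->
  \sum_(x <- r) (x == y)%:R * F x = F y.
Proof.
elim: r => [|x r IH] //= /andP[xr ur]; rewrite inE big_cons.
have t1 : (true%:R : k) = 1 by [].
case: (eqVneq y x) => [->|nyx] /=.
  rewrite ?eqxx ?t1 mul1r big1_seq ?addr0 // => z /andP[_ zr].
  by case: eqP => [ez|_]; [move: xr; rewrite -ez zr | rewrite mul0r].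
by rewrite mul0r add0r => /(IH ur).
Qed.

End LinSeq.

Section Dec.
Variable k : fieldType.
Variable X : choiceType.
Variable tr : X -> X -> X.
Variable q : X -> X -> k.
Local Notation TV := (TV k X).
Local Notation vw := (vw k).
Local Notation shw := (shw tr q).
Local Notation shuf := (shuf tr q).
Local Notation qw := (qw q).
Local Notation Lw := (Lw tr q).
Local Notation Aw := (Aw tr q).
Local Notation splits := (@splits X).
Local Notation actT := (actT tr q).
Implicit Types (s t : TV) (u w W : seq X).

Lemma size_take_le u i : (i <= size u)%N -> size (take i u) = i.
Proof. by move=> h; rewrite size_take_min (minn_idPl h). Qed.

Lemma sum_prefix (r1 : seq (seq X)) u (H : seq X -> k) : uniq r1 ->
  (forall i, (i <= size u)%N -> take i u \in r1) ->
  \sum_(u1 <- r1) (take (size u1) u == u1)%:R * H u1 =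
  \sum_(i <- iota 0 (size u).+1) H (take i u).
Proof.
move=> ur hr.
rewrite (@eq_bigr _ _ _ _ _ _ _ (fun u1 => if take (size u1) u == u1 then H u1 else 0));
  last by move=> u1 _; case: eqP; rewrite ?mul1r ?mul0r.
rewrite -big_mkcond -big_filter -(big_map (fun i => take i u) xpredT).
apply: perm_big; apply: uniq_perm; first by rewrite filter_uniq.
  rewrite map_inj_in_uniq ?iota_uniq // => i j.
  rewrite !mem_iota !add0n !ltnS => hi hj e.
  by rewrite -(size_take_le hi) e size_take_le.
move=> x; rewrite mem_filter; apply/andP/mapP.
  case=> /eqP e _; exists (size x); last by [].
  rewrite mem_iota leq0n add0n ltnS /=.
  have := size_take (size x) u; rewrite e.
  by case: ltnP => h1 h2; [apply: ltnW | rewrite h2].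
case=> i; rewrite mem_iota leq0n add0n ltnS /= => hi ->.
by rewrite size_take_le // eqxx hr.
Qed.

Lemma cat_eq_take u1 u2 u :
  (u1 ++ u2 == u) = (take (size u1) u == u1) && (u2 == drop (size u1) u).
Proof.
apply/eqP/andP => [<-|[/eqP e1 /eqP ->]].
  by rewrite take_size_cat // drop_size_cat.
by rewrite -{1}e1 cat_take_drop.
Qed.

Lemma splits_sum (r1 r2 : seq (seq X)) u (G : seq X -> seq X -> k) :
  uniq r1 -> uniq r2 ->
  (forall p, p \in splits u -> p.1 \in r1 /\ p.2 \in r2) ->
  \sum_(p <- splits u) G p.1 p.2 =
  \sum_(u1 <- r1) \sum_(u2 <- r2) (u1 ++ u2 == u)%:R * G u1 u2.
Proof.
move=> u1r u2r hr.
have hsp i : (i <= size u)%N -> (take i u, drop i u) \in splits u.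
  by move=> hi; apply/mapP; exists i; rewrite // mem_iota add0n ltnS.
transitivity (\sum_(u1 <- r1) (take (size u1) u == u1)%:R * G u1 (drop (size u1) u)).
  rewrite sum_prefix //; last by move=> i /hsp /hr [].
  rewrite /DevC.splits big_map; apply: eq_big_seq => i.
  by rewrite mem_iota add0n ltnS => hi /=; rewrite size_take_le.
apply: eq_bigr => u1 _.
under eq_bigr do rewrite cat_eq_take natr_and -mulrA.
rewrite -mulr_sumr.
case: (eqVneq (take (size u1) u) u1) => [e|]; last by rewrite !mul0r.
rewrite !natr_true !mul1r.
rewrite sum_delta_seq //.
have hs : (size u1 <= size u)%N.
  by have := size_take (size u1) u; rewrite e; case: ltnP => h1 h2; [apply: ltnW | rewrite h2].
by have /hr [] := hsp _ hs.
Qed.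

Definition dec s (S : seq (TV * TV)) :=
  forall w1 w2, s@_(w1 ++ w2) = \sum_(p <- S) p.1@_w1 * p.2@_w2.

Lemma dec_reindex s S (G : seq X -> seq X -> k) : dec s S ->
  lin (fun u => \sum_(p <- splits u) G p.1 p.2) s =
  \sum_(p <- S) lin (fun u1 => lin (fun u2 => G u1 u2) p.2) p.1.
Proof.
move=> hs.
set r1 := undup (flatten [seq map fst (splits u) | u <- msupp s] ++
                 flatten [seq (msupp p.1 : seq _) | p <- S]).
set r2 := undup (flatten [seq map snd (splits u) | u <- msupp s] ++
                 flatten [seq (msupp p.2 : seq _) | p <- S]).
have ur1 : uniq r1 by apply: undup_uniq.
have ur2 : uniq r2 by apply: undup_uniq.
transitivity (\sum_(u1 <- r1) \sum_(u2 <- r2) s@_(u1 ++ u2) * G u1 u2); last first.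
  under eq_bigr do under eq_bigr do rewrite hs mulr_suml.
  under eq_bigr do rewrite exchange_big /=.
  rewrite exchange_big /=; apply: eq_big_seq => p pS.
  rewrite (@lin_incl_seq _ _ r1) //; last first.
    move=> x xi; rewrite mem_undup mem_cat; apply/orP; right.
    by apply/flattenP; exists (msupp p.1 : seq _) => //; apply/mapP; exists p.
  apply: eq_bigr => u1 _; rewrite (@lin_incl_seq _ _ r2) //; last first.
    move=> x xi; rewrite mem_undup mem_cat; apply/orP; right.
    by apply/flattenP; exists (msupp p.2 : seq _) => //; apply/mapP; exists p.
  by rewrite mulr_sumr; apply: eq_bigr => u2 _; ring.
rewrite /lin.
under eq_big_seq => u uin.
  rewrite (@splits_sum r1 r2) //; last first.
    move=> p pin; rewrite !mem_undup !mem_cat; split; apply/orP; left;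
      apply/flattenP.
      by exists (map fst (splits u)); [apply/mapP; exists u | apply/mapP; exists p].
    by exists (map snd (splits u)); [apply/mapP; exists u | apply/mapP; exists p].
  over.
under eq_bigr do rewrite mulr_sumr.
rewrite exchange_big; apply: eq_bigr => u1 _.
under eq_bigr do rewrite mulr_sumr.
rewrite exchange_big; apply: eq_bigr => u2 _.
have := lin_coef s (u1 ++ u2); rewrite /lin => <-.
rewrite mulr_suml; apply: eq_bigr => u _; rewrite eq_sym; ring.
Qed.

Lemma dec_reindex2 s S (G : seq X * seq X -> k) : dec s S ->
  lin (fun u => \sum_(p <- splits u) G p) s =
  \sum_(p <- S) lin (fun u1 => lin (fun u2 => G (u1, u2)) p.2) p.1.
Proof.
move=> hs; rewrite -(dec_reindex (fun a b => G (a, b)) hs).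
by apply: lin_eq_in => u _; apply: eq_bigr => [[]].
Qed.

Lemma dec_shuf s t (S : seq (TV * TV * seq X)) (T : seq (TV * TV)) :
  dec s [seq p.1 | p <- S] -> dec t T ->
  (forall p, p \in S -> forall u, u \in msupp p.1.2 -> forall w,
      Lw u w = Lw p.2 w /\ Aw u w = Aw p.2 w) ->
  dec (shuf s t) [seq (shuf p.1.1 (actT p.2 r.1), shuf p.1.2 r.2) | p <- S, r <- T].
Proof.
move=> hs ht hS W1 W2.
rewrite shufE.
under [LHS]lin_eq_in => u _.
  under lin_eq_in => w _ do rewrite shw_cop.
  rewrite lin_sumf.
  over.
rewrite (dec_reindex2 _ hs) big_map big_allpairs_dep; apply: eq_big_seq => P PS.
under lin_eq_in => u1 _ do under lin_eq_in => u2 _ do rewrite (dec_reindex2 _ ht).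
under lin_eq_in => u1 _ do rewrite lin_sumf.
rewrite lin_sumf; apply: eq_bigr => Q _ /=.
rewrite !shufE.
transitivity (lin (fun u1 => lin (fun u2 => lin (fun w1 => lin (fun w2 =>
   (Lw P.2 w1 * (shw u1 (Aw P.2 w1))@_W1) * (shw u2 w2)@_W2) Q.2) Q.1) P.1.2) P.1.1).
  apply: lin_eq_in => u1 _; apply: lin_eq_in => u2 u2in.
  apply: lin_eq_in => w1 _; apply: lin_eq_in => w2 _.
  by have [e1 e2] := hS P PS u2 u2in w1; rewrite /T3 /= e1 e2.
rewrite -lin_mulr; apply: lin_eq_in => u1 _.
rewrite -lin_mull; apply: lin_eq_in => u2 _.
rewrite lin_actT -lin_mulr; apply: lin_eq_in => w1 _.
by rewrite -lin_mull.
Qed.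

End Dec.

End DevF.

Module DevG.
Import DevA DevB DevC DevD DevE DevF.
Set Implicit Arguments.
Unset Strict Implicit.
Unset Printing Implicit Defensive.
Import GRing.Theory.
Local Open Scope ring_scope.


Section Grad.
Variable k : fieldType.
Variable X : choiceType.
Variable tr : X -> X -> X.
Variable q : X -> X -> k.
Local Notation TV := (TV k X).
Local Notation vw := (vw k).
Local Notation shw := (shw tr q).
Local Notation shuf := (shuf tr q).
Implicit Types (s t : TV) (u w W : seq X).

Variable E : seq X -> seq X -> Prop.
Hypothesis Erefl : forall w, E w w.
Hypothesis Esym : forall u w, E u w -> E w u.
Hypothesis Etrans : forall u v w, E u v -> E v w -> E u w.
Hypothesis Ecat : forall u u' w w', E u u' -> E w w' -> E (u ++ w) (u' ++ w').
Hypothesis Eshw : forall u w W, (shw u w)@_W != 0 -> E (u ++ w) W.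

Variable D : TV -> Prop.

Definition homc (d : TV) (r : seq X) := forall w, d@_w != 0 -> E r w.

Definition HomE c := exists L : seq (TV * seq X),
  (forall p, p \in L -> D p.1 /\ homc p.1 p.2) /\ c = \sum_(p <- L) p.1.

Definition hasComp c := forall w0, exists d, D d /\
  forall w, (E w0 w -> d@_w = c@_w) /\ (~ E w0 w -> d@_w = 0).

Hypothesis D0 : D 0.
Hypothesis DD : forall s t, D s -> D t -> D (s + t).

Lemma HomE_hasComp c : HomE c -> hasComp c.
Proof.
case=> L [hL ->] w0.
elim: L hL => [|p L IH] hL.
  by exists 0; split => // w; rewrite big_nil mcoeff0.
have [d [Dd hd]] : exists d, D d /\
    forall w, (E w0 w -> d@_w = (\sum_(p <- L) p.1)@_w) /\ (~ E w0 w -> d@_w = 0).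
  by apply: IH => p' p'L; apply: hL; rewrite inE p'L orbT.
have [Dp hp] := hL p (mem_head _ _).
case: (classic (E w0 p.2)) => hw.
  exists (p.1 + d); split; first exact: DD.
  move=> w; split => hw0.
    by rewrite big_cons !mcoeffD (proj1 (hd w) hw0).
  rewrite mcoeffD (proj2 (hd w) hw0) addr0.
  case: (eqVneq (p.1@_w) 0) => // /hp hpw.
  by case: hw0; apply: Etrans hpw.
exists d; split => // w; split => hw0; last exact: (proj2 (hd w) hw0).
rewrite big_cons mcoeffD (proj1 (hd w) hw0).
case: (eqVneq (p.1@_w) 0) => [->|/hp hpw]; first by rewrite add0r.
by case: hw; apply: Etrans hw0 (Esym hpw).
Qed.

Lemma HomE_add s t : HomE s -> HomE t -> HomE (s + t).
Proof.
case=> L [hL ->] [L' [hL' ->]]; exists (L ++ L'); split; last by rewrite big_cat.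
by move=> p; rewrite mem_cat => /orP[/hL|/hL'].
Qed.

Hypothesis DZ : forall a s, D s -> D (a *: s).

Lemma HomE_scale a s : HomE s -> HomE (a *: s).
Proof.
case=> L [hL ->]; exists [seq (a *: p.1, p.2) | p <- L]; split.
  move=> p /mapP [p' p'L ->] /=; have [Dp hp] := hL p' p'L.
  split; first exact: DZ.
  by move=> w; rewrite mcoeffZ mulf_eq0 negb_or => /andP[_ /hp].
by rewrite big_map scaler_sumr.
Qed.

Hypothesis Dshuf : forall s t, D s -> D t -> D (shuf s t).

Lemma homc_shuf d e r rho : homc d r -> homc e rho -> homc (shuf d e) (r ++ rho).
Proof.
move=> hd he W hW0; apply: NNPP => hW; move/eqP: hW0; apply.
rewrite shufE /lin big1_seq // => u /andP[_ uin].
rewrite big1_seq ?mulr0 // => w /andP[_ win].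
case: (eqVneq ((shw u w)@_W) 0) => [->|/Eshw h]; first by rewrite mulr0.
case: hW; apply: Etrans (Ecat (hd _ _) (he _ _)) h.
  by rewrite mcoeff_neq0.
by rewrite mcoeff_neq0.
Qed.

Lemma HomE_shuf s t : HomE s -> HomE t -> HomE (shuf s t).
Proof.
case=> L [hL ->] [L' [hL' ->]].
exists [seq (shuf p.1 r.1, p.2 ++ r.2) | p <- L, r <- L']; split.
  move=> x /allpairsP [[p r] [pL rL ->]] /=.
  have [Dp hp] := hL p pL; have [Dr hr] := hL' r rL.
  by split; [apply: Dshuf | apply: homc_shuf].
rewrite big_allpairs_dep shuf_suml; apply: eq_bigr => p _.
by rewrite shuf_sumr.
Qed.

Lemma HomE_one : D (vw [::]) -> HomE (vw [::]).
Proof.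
move=> h; exists [:: (vw [::], [::])]; split; last by rewrite big_seq1.
move=> p; rewrite inE => /eqP -> /=; split => // w.
rewrite vwE; have [<-|ne] := eqVneq [::] w; first by move=> _; apply: Erefl.
by rewrite eqxx.
Qed.

Lemma HomE_homog d r : D d -> homc d r -> HomE d.
Proof.
move=> Dd hd; exists [:: (d, r)]; split; last by rewrite big_seq1.
by move=> p; rewrite inE => /eqP ->.
Qed.

Lemma HomE_mono (D' : TV -> Prop) c : (forall t, D t -> D' t) -> HomE c ->
  exists L : seq (TV * seq X),
  (forall p, p \in L -> D' p.1 /\ homc p.1 p.2) /\ c = \sum_(p <- L) p.1.
Proof.
move=> sub [L [hL e]]; exists L; split => // p /hL [h1 h2]; split => //.
exact: sub.
Qed.

End Grad.

End DevG.

Module DevH.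
Import DevA DevB DevC DevD DevE DevF DevG.
Set Implicit Arguments.
Unset Strict Implicit.
Unset Printing Implicit Defensive.
Import GRing.Theory.
Local Open Scope ring_scope.


Section Main.
Variable k : fieldType.
Variable X : choiceType.
Variable tr : X -> X -> X.
Variable q : X -> X -> k.
Variable trinv : X -> X -> X.
Hypothesis Hsd : forall x y z, tr x (tr y z) = tr (tr x y) (tr x z).
Hypothesis HtrK : forall x, cancel (tr x) (trinv x).
Hypothesis HtrKV : forall x, cancel (trinv x) (tr x).
Hypothesis Hcoc : forall x y z,
  q (tr x y) (tr x z) * q x z = q x (tr y z) * q y z.
Hypothesis Hq0 : forall x y, q x y != 0.
Variable x0 : X.
Local Notation TV := (TV k X).
Local Notation vw := (vw k).
Local Notation shw := (shw tr q).
Local Notation shuf := (shuf tr q).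
Local Notation Lw := (Lw tr q).
Local Notation Aw := (Aw tr q).
Local Notation actT := (actT tr q).
Local Notation nichols := (nichols tr q).
Implicit Types (s t : TV) (u w W : seq X).

Definition Esz u w := size u = size w.
Local Notation Egx := (GX_eq tr).

Lemma Esz_refl w : Esz w w. Proof. by []. Qed.
Lemma Esz_sym u w : Esz u w -> Esz w u. Proof. by rewrite /Esz => ->. Qed.
Lemma Esz_trans u v w : Esz u v -> Esz v w -> Esz u w. Proof. by rewrite /Esz => -> ->. Qed.
Lemma Esz_cat u u' w w' : Esz u u' -> Esz w w' -> Esz (u ++ w) (u' ++ w').
Proof. by rewrite /Esz !size_cat => -> ->. Qed.
Lemma Esz_shw u w W : (shw u w)@_W != 0 -> Esz (u ++ w) W.
Proof. by move/(shw_size); rewrite /Esz size_cat => ->. Qed.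

Definition CD (D : TV -> Prop) c := exists S : seq (TV * TV),
  (forall p, p \in S -> nichols p.1 /\ D p.2) /\ dec c S.

Lemma CD_add D s t : CD D s -> CD D t -> CD D (s + t).
Proof.
case=> S [hS ds] [T [hT dt]]; exists (S ++ T); split.
  by move=> p; rewrite mem_cat => /orP[/hS|/hT].
by move=> w1 w2; rewrite mcoeffD ds dt big_cat.
Qed.

Lemma CD_scale D a s : CD D s -> CD D (a *: s).
Proof.
case=> S [hS ds]; exists [seq (a *: p.1, p.2) | p <- S]; split.
  move=> p /mapP [p' p'S ->] /=; have [n1 n2] := hS p' p'S.
  by split => //; apply: nich_scale.
move=> w1 w2; rewrite mcoeffZ ds big_map mulr_sumr; apply: eq_bigr => p _.
by rewrite mcoeffZ mulrA.
Qed.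

Lemma CD_one (D : TV -> Prop) : D (vw [::]) -> CD D (vw [::]).
Proof.
move=> h; exists [:: (vw [::], vw [::])]; split.
  by move=> p; rewrite inE => /eqP -> /=; split => //; apply: nich_one.
move=> w1 w2; rewrite big_seq1 /= !vwE.
by case: w1 => [|? ?]; case: w2 => [|? ?]; rewrite ?mul1r ?mul0r ?mulr0.
Qed.

Lemma refine_S (D : TV -> Prop) (S : seq (TV * TV)) :
  (forall p, p \in S -> nichols p.1 /\ D p.2) ->
  (forall c, D c -> HomE Egx D c) ->
  exists S3 : seq (TV * TV * seq X),
    (forall x, x \in S3 -> [/\ nichols x.1.1, D x.1.2 & homc Egx x.1.2 x.2]) /\
    forall w1 w2, \sum_(p <- S) p.1@_w1 * p.2@_w2 =
                  \sum_(x <- S3) x.1.1@_w1 * x.1.2@_w2.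
Proof.
move=> hS hD; elim: S hS => [|p S IH] hS.
  by exists [::]; split => // w1 w2; rewrite !big_nil.
have [S3 [h3 e3]] : exists S3 : seq (TV * TV * seq X),
    (forall x, x \in S3 -> [/\ nichols x.1.1, D x.1.2 & homc Egx x.1.2 x.2]) /\
    forall w1 w2, \sum_(p <- S) p.1@_w1 * p.2@_w2 =
                  \sum_(x <- S3) x.1.1@_w1 * x.1.2@_w2.
  by apply: IH => p' p'S; apply: hS; rewrite inE p'S orbT.
have [n1 d2] := hS p (mem_head _ _).
have [L [hL eqL]] := hD _ d2.
exists ([seq ((p.1, e.1), e.2) | e <- L] ++ S3); split.
  move=> x; rewrite mem_cat => /orP[/mapP [e eL ->] /=|/h3 //].
  by have [] := hL e eL; split.
move=> w1 w2; rewrite big_cons big_cat e3 big_map; congr (_ + _).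
by rewrite eqL raddf_sum mulr_sumr.
Qed.

Lemma CD_shuf (D : TV -> Prop) s t :
  (forall c, D c -> HomE Egx D c) ->
  (forall s t, D s -> D t -> D (shuf s t)) ->
  CD D s -> CD D t -> CD D (shuf s t).
Proof.
move=> hD Dsh [S [hS ds]] [T [hT dt]].
have [S3 [h3 e3]] := refine_S hS hD.
have ds3 : dec s [seq x.1 | x <- S3].
  by move=> w1 w2; rewrite ds e3 big_map.
have dR := dec_shuf ds3 dt.
eexists; split; last first.
  apply: dR => x xS u uin w.
  have [_ _ hh] := h3 x xS.
  have := hh u; rewrite mcoeff_neq0 => /(_ uin) hx.
  by have [e1 e2] := GX_actw Hsd HtrK HtrKV Hcoc Hq0 hx w.
move=> p /allpairsP [[x r] [xS rT ->]] /=.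
have [n1 d2 _] := h3 x xS; have [n1' d2'] := hT r rT.
split; first by apply: nich_mul => //; apply: nichols_act.
exact: Dsh.
Qed.

Section Gen.
Variable C : TV -> Prop.
Variable xx : TV.
Local Notation D := (gen_subalg tr q C xx).

Definition good c := [/\ nichols c, HomE Esz D c, HomE Egx D c & CD D c].

Hypothesis hC : forall c, C c -> good c.
Hypothesis hx : good xx.

Lemma D0 : D 0.
Proof. by rewrite -(scale0r (vw [::])); apply: gen_scale; apply: gen_one. Qed.

Lemma gen_good1 c : D c -> [/\ nichols c, HomE Esz D c & HomE Egx D c].
Proof.
elim=> [c' Cc'| | |s t _ [n1 h1 g1] _ [n2 h2 g2]|a s _ [n1 h1 g1]
       |s t _ [n1 h1 g1] _ [n2 h2 g2]].
- by have [] := hC Cc'.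
- by have [] := hx.
- split; first exact: nich_one.
    by apply: HomE_one => //; first [exact: Esz_refl | exact: gen_one].
  by apply: HomE_one => //; first [exact: GX_refl | exact: gen_one].
- split; first exact: nich_add.
    exact: HomE_add.
  exact: HomE_add.
- split; first exact: nich_scale.
    by apply: HomE_scale => // b t; apply: gen_scale.
  by apply: HomE_scale => // b t; apply: gen_scale.
- split; first exact: nich_mul.
    apply: HomE_shuf => //; [exact: Esz_trans|exact: Esz_cat|exact: Esz_shw|move=> *; exact: gen_mul].
  apply: HomE_shuf => //; [exact: (@GX_trans _ _)|exact: (@GX_cat _ _)|exact: shw_GX|move=> *; exact: gen_mul].
Qed.

Lemma gen_good c : D c -> good c.
Proof.
move=> Dc; have [n1 h1 g1] := gen_good1 Dc; split => //.
elim: Dc {n1 h1 g1} => [c' Cc'| | |s t _ h1 _ h2|a s _ h1|s t _ h1 _ h2].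
- by have [] := hC Cc'.
- by have [] := hx.
- by apply: CD_one; apply: gen_one.
- exact: CD_add.
- exact: CD_scale.
- apply: CD_shuf => //; first by move=> c0 /gen_good1 [].
  by move=> *; apply: gen_mul.
Qed.

Lemma gen_lcsa : lcsa tr q D.
Proof.
split; first by move=> c /gen_good [].
split; first exact: gen_one.
split; first by move=> *; apply: gen_add.
split; first by move=> *; apply: gen_scale.
split; first by move=> *; apply: gen_mul.
split.
  move=> c /gen_good [_ hs _ _] n.
  have := HomE_hasComp Esz_sym Esz_trans D0 (@gen_add k X tr q C xx) hs (nseq n x0).
  case=> d [Dd hd]; exists d; split => // w.
  rewrite /Esz size_nseq in hd.
  case: eqP => [e|ne]; first by apply: (proj1 (hd w)).
  by apply: (proj2 (hd w)) => e; apply: ne.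
split.
  move=> c /gen_good [_ _ hg _] w0.
  exact: (HomE_hasComp (@GX_sym X tr) (@GX_trans X tr) D0 (@gen_add k X tr q C xx) hg w0).
by move=> c /gen_good [_ _ _ [S [hS dS]]]; exists S; split.
Qed.

End Gen.

End Main.

End DevH.

Module DevI.
Import DevA DevB DevC DevD DevE DevF DevG DevH.
Set Implicit Arguments.
Unset Strict Implicit.
Unset Printing Implicit Defensive.
Local Open Scope group_scope.


Section Crack.
Variable G : groupType.
Variable Xp : pred G.
Hypothesis hX : conj_closed Xp.
Local Notation X := (crack Xp).
Local Notation tr := (ctr hX).

Definition ctrinv (x y : X) : X := exist _ (sval y ^ sval x) (hX (sval x) (proj2_sig y)).

Lemma crack_sd x y z : tr x (tr y z) = tr (tr x y) (tr x z).
Proof.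
apply: val_inj => /=.
by rewrite -!conjgM -!invgM -conjgCV.
Qed.

Lemma crack_K x : cancel (tr x) (ctrinv x).
Proof. by move=> y; apply: val_inj => /=; rewrite conjgKV. Qed.
Lemma crack_KV x : cancel (ctrinv x) (tr x).
Proof. by move=> y; apply: val_inj => /=; rewrite conjgK. Qed.
Lemma crack_idem x : tr x x = x.
Proof. by apply: val_inj => /=; rewrite conjgE invgK mulgV mulg1. Qed.

Lemma conjV_E (x g : G) : x ^ g^-1 = g * x * g^-1.
Proof. by rewrite conjgE invgK mulgA. Qed.

Lemma braid_half (A B : G) : (B ^ A^-1) ^ B^-1 = A -> B * A * B = A * B * A.
Proof.
rewrite !conjV_E => h.
have := congr1 (fun z => z * B * A) h.
by rewrite mulgVK -mulgA mulgVK mulgA.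
Qed.

Lemma braid_half2 (A B : G) : B * A * B = A * B * A -> (A ^ B^-1) ^ A^-1 = B.
Proof.
rewrite !conjV_E => h.
by rewrite !mulgA -h mulgK mulgK.
Qed.

Lemma crack_braid a b : tr b (tr a b) = a -> tr a (tr b a) = b.
Proof.
move=> /(congr1 sval) /= /braid_half h; apply: val_inj => /=.
by apply: braid_half2; rewrite h.
Qed.

End Crack.

End DevI.

Module DevJ.
Import DevA DevB DevC DevD DevE DevF DevG DevH DevI.
Set Implicit Arguments.
Unset Strict Implicit.
Unset Printing Implicit Defensive.
Import GRing.Theory.
Local Open Scope ring_scope.


Section Final.
Variable k : fieldType.
Variable X : choiceType.
Variable tr : X -> X -> X.
Variable q : X -> X -> k.
Variable trinv : X -> X -> X.
Hypothesis Hsd : forall x y z, tr x (tr y z) = tr (tr x y) (tr x z).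
Hypothesis HtrK : forall x, cancel (tr x) (trinv x).
Hypothesis HtrKV : forall x, cancel (trinv x) (tr x).
Hypothesis Hcoc : forall x y z,
  q (tr x y) (tr x z) * q x z = q x (tr y z) * q y z.
Hypothesis Hq0 : forall x y, q x y != 0.
Hypothesis Hidem : forall x, tr x x = x.
Variables a b : X.
Hypothesis hab : tr a b != b.
Hypothesis hbd : tr b (tr a b) != a.
Local Notation TV := (TV k X).
Local Notation vw := (vw k).
Local Notation shw := (shw tr q).
Local Notation shuf := (shuf tr q).
Local Notation nichols := (nichols tr q).
Local Notation Egx := (GX_eq tr).
Implicit Types (s t : TV) (u w W : seq X).

Let d := tr a b.
Let e := tr d a.
Let kap := q a b * q d a.

Lemma rapp_vw c w : rapp c (vw w) = vw (rcons w c).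
Proof. by apply: malg_lin => f; rewrite lin_rapp !lin_vw. Qed.

Lemma shw11 x y : shw [:: x] [:: y] = vw [:: x; y] + q x y *: vw [:: tr x y; x].
Proof.
rewrite (shw_rcons tr q [::] x [::] y) /= shw_nil_l shw_nil_r !rapp_vw /=.
by rewrite qw_cons qw_nil mulr1 addrC.
Qed.

Definition xx : TV := shuf (vw [:: a]) (vw [:: b]) + (- q a b) *: shuf (vw [:: d]) (vw [:: a]).

Lemma xx_coef W : xx@_W = ([:: a; b] == W)%:R - kap * ([:: e; d] == W)%:R.
Proof.
rewrite /xx !shuf_vw !shw11 !mcoeffD !mcoeffZ !mcoeffD !mcoeffZ !vwE /kap /e /d.
ring.
Qed.

Lemma nichols_xx : nichols xx.
Proof.
apply: nich_add; first by apply: nich_mul; apply: nich_gen.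
by apply: nich_scale; apply: nich_mul; apply: nich_gen.
Qed.

Lemma a_neq_b : a != b.
Proof. by apply: contra hab => /eqP ->; rewrite Hidem. Qed.
Lemma a_neq_d : a != d.
Proof.
apply/eqP => ad; move: a_neq_b; rewrite /d in ad.
by rewrite -{1}(Hidem a) in ad; move: (can_inj (HtrK a) ad) => ->; rewrite eqxx.
Qed.
Lemma d_neq_b : d != b. Proof. exact: hab. Qed.

Lemma split1 c w1 w2 : ([:: c] == w1 ++ w2)%:R =
  ([:: c] == w1)%:R * ([::] == w2)%:R + ([::] == w1)%:R * ([:: c] == w2)%:R :> k.
Proof.
case: w1 => [|x1 [|x2 w1]]; case: w2 => [|y1 [|y2 w2]] //=;
  rewrite ?eqseq_cons ?andbT ?andbF ?mul0r ?mulr0 ?add0r ?addr0 ?mul1r ?mulr1 //.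
Qed.

Lemma split2 x y w1 w2 : ([:: x; y] == w1 ++ w2)%:R =
  ([:: x; y] == w1)%:R * ([::] == w2)%:R + ([::] == w1)%:R * ([:: x; y] == w2)%:R
  + ([:: x] == w1)%:R * ([:: y] == w2)%:R :> k.
Proof.
case: w1 => [|x1 [|x2 [|x3 w1]]]; case: w2 => [|y1 [|y2 [|y3 w2]]] //=;
  rewrite ?eqseq_cons ?andbT ?andbF ?mul0r ?mulr0 ?add0r ?addr0 ?mul1r ?mulr1 //.
by rewrite natr_and.
Qed.

Lemma dec_vw1 c : dec (vw [:: c]) [:: (vw [:: c], vw (@nil X)); (vw (@nil X), vw [:: c])].
Proof. by move=> w1 w2; rewrite !big_cons big_nil addr0 /= !vwE split1. Qed.

Lemma dec_xx : dec xx [:: (xx, vw (@nil X)); (vw (@nil X), xx); (vw [:: a], vw [:: b]);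
                        ((- kap) *: vw [:: e], vw [:: d])].
Proof.
move=> w1 w2; rewrite !big_cons big_nil /= !xx_coef !mcoeffZ !vwE !split2; ring.
Qed.

Definition goodD (D : TV -> Prop) c :=
  [/\ nichols c, HomE (@Esz X) D c, HomE Egx D c & CD tr q D c].

Lemma good_letter (D : TV -> Prop) c : D (vw [:: c]) -> D (vw (@nil X)) -> goodD D (vw [:: c]).
Proof.
move=> h1 h0; split.
- exact: nich_gen.
- apply: (@HomE_homog _ _ _ _ _ [:: c] h1) => w; rewrite vwE.
  by have [<-|] := eqVneq [:: c] w; [|rewrite eqxx].
- apply: (@HomE_homog _ _ _ _ _ [:: c] h1) => w; rewrite vwE.
  by have [<- _|] := eqVneq [:: c] w; [apply: GX_refl|rewrite eqxx].
- exists [:: (vw [:: c], vw (@nil X)); (vw (@nil X), vw [:: c])]; split; last exact: dec_vw1.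
  move=> p; rewrite !inE => /orP[/eqP->|/eqP->] /=; split => //.
    exact: nich_gen.
  exact: nich_one.
Qed.

Lemma good_mono (D1 D2 : TV -> Prop) c : (forall t, D1 t -> D2 t) ->
  goodD D1 c -> goodD D2 c.
Proof.
move=> sub [n h1 h2 [S [hS dS]]]; split => //.
- exact: HomE_mono h1.
- exact: HomE_mono h2.
exists S; split => // p /hS [? ?]; split => //; exact: sub.
Qed.

Lemma neq_size (s1 s2 : seq X) : size s1 != size s2 -> (s1 == s2) = false.
Proof. by apply: contraNF => /eqP ->. Qed.

Definition Inv (c : TV) := c@_[:: a; b] = 0 /\ forall f, f != b -> f != d -> c@_[:: f] = 0.

Lemma shuf_zero s t W : (forall u w, s@_u * t@_w * (shw u w)@_W = 0) ->
  (shuf s t)@_W = 0.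
Proof.
move=> h; rewrite shufE /lin big1 // => u _.
by rewrite mulr_sumr big1 // => w _; rewrite mulrA h.
Qed.

Lemma coef11 x1 y1 : x1 \in [:: b; d] -> y1 \in [:: b; d] ->
  (shw [:: x1] [:: y1])@_[:: a; b] = 0.
Proof.
move=> hx hy; rewrite shw11 mcoeffD mcoeffZ !vwE !eqseq_cons !andbT.
have -> : (x1 == a) = false.
  move: hx; rewrite !inE => /orP[] /eqP ->; apply/negbTE; rewrite eq_sym.
    exact: a_neq_b.
  exact: a_neq_d.
rewrite /= add0r.
have [xb|] := eqVneq x1 b; last by rewrite andbF mulr0.
rewrite andbT xb; have -> : (tr b y1 == a) = false; last by rewrite mulr0.
move: hy; rewrite !inE => /orP[] /eqP ->; apply/negbTE.
  by rewrite Hidem eq_sym a_neq_b.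
exact: hbd.
Qed.

Lemma Inv_shuf s t : Inv s -> Inv t -> Inv (shuf s t).
Proof.
move=> [sab s1] [tab t1].
have memS (c : TV) x : (forall f, f != b -> f != d -> c@_[:: f] = 0) ->
    c@_[:: x] != 0 -> x \in [:: b; d].
  move=> h hx; apply: contraR hx; rewrite !inE negb_or => /andP[h1 h2].
  by rewrite h.
split.
  apply: shuf_zero => u w.
  case: (eqVneq ((shw u w)@_[:: a; b]) 0) => [->|nz]; first by rewrite mulr0.
  have hs := shw_size nz.
  case: u hs nz => [|x1 [|x2 u]] hs nz.
  - rewrite shw_nil_l vwE; case: eqP => [->|_]; first by rewrite tab mulr0 mul0r.
    by rewrite mulr0.
  - case: w hs nz => [|y1 [|y2 w]] hs nz.
    + by rewrite shw_nil_r vwE eqseq_cons andbF mulr0.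
    + case: (eqVneq (s@_[:: x1]) 0) => [->|sx]; first by rewrite !mul0r.
      case: (eqVneq (t@_[:: y1]) 0) => [->|ty]; first by rewrite mulr0 mul0r.
      by rewrite coef11 ?mulr0 //; [apply: memS sx | apply: memS ty].
    + by move: hs => /=; lia.
  - case: w hs nz => [|y1 w] hs nz.
    + rewrite shw_nil_r vwE; case: eqP => [->|_]; first by rewrite sab !mul0r.
      by rewrite mulr0.
    + by move: hs => /=; lia.
move=> f fb fd; apply: shuf_zero => u w.
case: (eqVneq ((shw u w)@_[:: f]) 0) => [->|nz]; first by rewrite mulr0.
have hs := shw_size nz.
case: u hs nz => [|x1 [|x2 u]] hs nz.
- rewrite shw_nil_l vwE; case: eqP => [->|_]; first by rewrite t1 // mulr0 mul0r.
  by rewrite mulr0.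
- case: w hs nz => [|y1 w] hs nz.
  + rewrite shw_nil_r vwE; case: eqP => [->|_]; first by rewrite s1 // !mul0r.
    by rewrite mulr0.
  + by move: hs => /=; lia.
- by move: hs => /=; lia.
Qed.

Let C1 := fun t : TV => t = vw [:: b].
Let Cp := gen_subalg tr q C1 (vw [:: d]).

Lemma Inv_Cp c : Cp c -> Inv c.
Proof.
elim=> [c' ->| | |s t _ [h1 h2] _ [h3 h4]|z s _ [h1 h2]|s t _ h1 _ h2].
- split; first by rewrite vwE neq_size.
  by move=> f fb _; rewrite vwE eqseq_cons andbT eq_sym (negbTE fb).
- split; first by rewrite vwE neq_size.
  by move=> f _ fd; rewrite vwE eqseq_cons andbT eq_sym (negbTE fd).
- by split => [|f _ _]; rewrite vwE neq_size.
- split; first by rewrite mcoeffD h1 h3 addr0.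
  by move=> f fb fd; rewrite mcoeffD h2 // h4 // addr0.
- split; first by rewrite mcoeffZ h1 mulr0.
  by move=> f fb fd; rewrite mcoeffZ h2 // mulr0.
- exact: Inv_shuf.
Qed.

Lemma xx_notin : ~ Cp xx.
Proof.
move/Inv_Cp => [h _]; move: h; rewrite xx_coef eqxx.
have -> : ([:: e; d] == [:: a; b]) = false.
  by rewrite !eqseq_cons (negbTE d_neq_b) andbF.
by rewrite mulr0 subr0 => /eqP; rewrite oner_eq0.
Qed.

Lemma xx_homog : homog 2 xx.
Proof.
move=> w hw; rewrite xx_coef.
have -> : ([:: a; b] == w) = false by apply: contraNF hw => /eqP <-.
have -> : ([:: e; d] == w) = false by apply: contraNF hw => /eqP <-.
by rewrite mulr0 subr0.
Qed.

Lemma GX_ab_ed : Egx [:: a; b] [:: e; d].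
Proof.
move=> H m e0 i hA hl hr h4 h5 phi hrel /=.
by rewrite !hr hrel hrel.
Qed.

Theorem final_gen : exists C, lcsa tr q C /\ extendable_in_degree tr q C 2.
Proof.
have hC1 : forall c, C1 c -> good tr q C1 (vw [:: d]) c.
  move=> c ->; have := @good_letter (gen_subalg tr q C1 (vw [:: d])) b.
  by case; [apply: gen_in | apply: gen_one | move=> *; split].
have hx1 : good tr q C1 (vw [:: d]) (vw [:: d]).
  have := @good_letter (gen_subalg tr q C1 (vw [:: d])) d.
  by case; [apply: gen_x | apply: gen_one | move=> *; split].
exists Cp; split; first exact: (gen_lcsa Hsd HtrK HtrKV Hcoc Hq0 a hC1 hx1).
exists xx; split.
- exact: nichols_xx.
- exact: xx_homog.
- exact: xx_notin.
set D := gen_subalg tr q Cp xx.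
have subD : forall t, Cp t -> D t by move=> t ht; apply: gen_in.
apply: (gen_lcsa Hsd HtrK HtrKV Hcoc Hq0 a).
  move=> c hc; have := gen_good Hsd HtrK HtrKV Hcoc Hq0 hC1 hx1 hc.
  by case=> n h1 h2 h3; have [] := @good_mono _ D c subD (And4 n h1 h2 h3); split.
have Dxx : D xx by apply: gen_x.
split.
- exact: nichols_xx.
- apply: (@HomE_homog _ _ _ _ _ [:: a; b] Dxx) => w; rewrite xx_coef.
  have [<-|nab] := eqVneq [:: a; b] w; first by [].
  have [<-|ned] := eqVneq [:: e; d] w; first by [].
  by rewrite mulr0 subr0 eqxx.
- apply: (@HomE_homog _ _ _ _ _ [:: a; b] Dxx) => w; rewrite xx_coef.
  have [<- _|nab] := eqVneq [:: a; b] w; first exact: GX_refl.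
  have [<- _|ned] := eqVneq [:: e; d] w; first exact: GX_ab_ed.
  by rewrite mulr0 subr0 eqxx.
exists [:: (xx, vw (@nil X)); (vw (@nil X), xx); (vw [:: a], vw [:: b]);
          ((- kap) *: vw [:: e], vw [:: d])]; split; last exact: dec_xx.
move=> p; rewrite !inE => /or4P [] /eqP -> /=.
- by split; [exact: nichols_xx | apply: gen_one].
- by split; [exact: nich_one | exact: Dxx].
- by split; [exact: nich_gen | apply: subD; apply: gen_in].
- by split; [apply: nich_scale; exact: nich_gen | apply: subD; apply: gen_x].
Qed.

End Final.

End DevJ.


Import DevA DevB DevC DevD DevE DevF DevG DevH DevI DevJ.

Theorem mainTheorem10 (k : closedFieldType) (hk : [pchar k]%R =i pred0)
  (G : groupType) (Xp : pred G) (hX : conj_closed Xp)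
  (q : crack Xp -> crack Xp -> k) :
  two_cocycle (ctr hX) q ->
  ~ braided_rack (ctr hX) ->
  exists C : TV k (crack Xp) -> Prop,
    lcsa (ctr hX) q C /\ extendable_in_degree (ctr hX) q C 2.
Proof.
move=> [Hq0 Hcoc] nb.
have [a [b [h1 h2]]] : exists a b, ctr hX a b <> b /\ ctr hX a (ctr hX b a) <> b.
  apply: NNPP => h; apply: nb; split; first exact: crack_idem.
  move=> x y; apply: NNPP => h'; apply: h; exists x, y.
  by split => E; apply: h'; [left|right].
apply: (@final_gen k _ (ctr hX) q (ctrinv hX) (crack_sd hX) (crack_K hX) (crack_KV hX)
          Hcoc Hq0 (crack_idem hX) a b).
  by apply/eqP.
apply/eqP => E; apply: h2; exact: crack_braid E.
Qed.
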